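(* Let $n \geqslant 1$ and $k \geqslant 1$ be integers, and let $U$ be the function defined in the context. Let $A, C \geqslant 0$ be integers with $B := n - A - C \geqslant 0$ and $0 \leqslant A - C < k$. For integers $C'$ and $c$ with $c \equiv C' \pmod{k+1}$ put $l_{C'}(c) = \frac{C' - c}{k+1}$. Then $$U(A, C) - U(A-k, C+k) = \sum_{c \equiv C \ (\mathrm{mod}\ k+1)} \sum_{j \geqslant 0} \binom{l_C(c)}{j} \binom{n}{c+j} \binom{n - c - j - l_C(c) - 1}{B - j} - \sum_{c \equiv C-1 \ (\mathrm{mod}\ k+1)} \sum_{j \geqslant 0} \binom{l_{C-1}(c)}{j} \binom{n}{c+j} \binom{n - c - j - l_{C-1}(c) - 1}{B - j},$$ where the outer sums run over all integers $c$ in the indicated residue class (only finitely many terms are nonzero).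
   Context: Binomial coefficients are generalized: for an integer (possibly negative) $m$ and integer $t$, $\binom{m}{t} = \frac{m(m-1)\cdots(m-t+1)}{t!}$ if $t \geqslant 0$ and $\binom{m}{t} = 0$ if $t < 0$. The multinomial coefficient is $\binom{n}{a, c} = \frac{n!}{a!\, c!\, (n-a-c)!}$ if $a, c, n-a-c \geqslant 0$ and $0$ otherwise. The function $U : \mathbb{Z}^2 \to \mathbb{Z}$ (depending on $n$ and $k$) is defined by: $U(a,c) = 0$ if $a < 0$, $c < 0$ or $n - a - c < 0$; for $a, c, n-a-c \geqslant 0$ with $a \geqslant c$, recursively (in decreasing order of $a$) $$U(a,c) = \binom{n}{a, c} - \binom{n}{a+1, c-1} - U(a+1, c) + U(a+1+k, c-1-k) + U(a+1+k, c-k);$$ and for $a, c, n-a-c \geqslant 0$ with $a < c$, $U(a,c) = U(c,a)$. *)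

(* Defs.v *)
From mathcomp Require Import all_boot all_order all_algebra.
Set Implicit Arguments. Unset Strict Implicit. Unset Printing Implicit Defensive.
Import Order.TTheory GRing.Theory Num.Theory.
Local Open Scope ring_scope.

Definition binz (m t : int) : int :=
  if t < 0 then 0
  else ((\prod_(i < absz t) (m - i%:Z)) %/ (absz t)`!%:Z)%Z.

Definition multinom (n : nat) (a c : int) : int :=
  if (0 <= a) && (0 <= c) && (0 <= n%:Z - a - c) then
    ((n`! %/ ((absz a)`! * (absz c)`! * (absz (n%:Z - a - c)%R)`!))%N)%:Z
  else 0.

(* Fuel-based implementation of the recursion defining U; the pair (a,c)
   is first normalised to (max a c, min a c) (symmetry U(a,c) = U(c,a)).
   All recursive calls strictly increase the first coordinate, and
   U vanishes once it exceeds n, so fuel n+1 suffices. *)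
Fixpoint Uaux (n k : nat) (fuel : nat) (a0 c0 : int) : int :=
  match fuel with
  | O => 0
  | S f =>
    if (a0 < 0) || (c0 < 0) || (n%:Z - a0 - c0 < 0) then 0
    else
      let a := Num.max a0 c0 in
      let c := Num.min a0 c0 in
      multinom n a c - multinom n (a + 1) (c - 1)
      - Uaux n k f (a + 1) c
      + Uaux n k f (a + 1 + k%:Z) (c - 1 - k%:Z)
      + Uaux n k f (a + 1 + k%:Z) (c - k%:Z)
  end.

Definition U (n k : nat) (a c : int) : int := Uaux n k n.+1 a c.

Definition lcoef (k : nat) (C' c : int) : int := ((C' - c) %/ (k.+1)%:Z)%Z.

(* Inner sum over j >= 0 (truncated at N; terms with j > B vanish). *)
Definition inner (n k N : nat) (B C' c : int) : int :=
  \sum_(0 <= j < N.+1)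
     binz (lcoef k C' c) j%:Z * binz n%:Z (c + j%:Z)
     * binz (n%:Z - c - j%:Z - lcoef k C' c - 1) (B - j%:Z).

(* Sum over integers c in [-N, N] with c = C' mod (k+1). *)
Definition outer (n k N : nat) (B C' : int) : int :=
  \sum_(0 <= i < (N + N).+1 | ((k.+1)%:Z %| (i%:Z - N%:Z - C'))%Z)
     inner n k N B C' (i%:Z - N%:Z).

(* Main.v *)
Require Import Defs.
From mathcomp Require Import all_boot all_order all_algebra.
From mathcomp Require Import zify ring.
Import Order.TTheory GRing.Theory Num.Theory.
Local Open Scope ring_scope.

Definition ff (m : int) (t : nat) : int := \prod_(i < t) (m - i%:Z).

Lemma ffS (m : int) (t : nat) : ff m t.+1 = ff m t * (m - t%:Z).
Proof. by rewrite /ff big_ord_recr. Qed.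

Lemma ffSl (m : int) (t : nat) : ff m t.+1 = m * ff (m - 1) t.
Proof.
rewrite /ff big_ord_recl /= subr0; congr (_ * _).
by apply: eq_bigr => i _; rewrite /bump /= PoszD; ring.
Qed.

Lemma ff0 m : ff m 0 = 1.
Proof. by rewrite /ff big_ord0. Qed.

Lemma ff_nat (M t : nat) : ff M%:Z t = (M ^_ t)%:Z.
Proof.
elim: t => [|t IH]; first by rewrite ff0 ffactn0.
rewrite ffS IH ffactnSr.
case: (leqP t M) => h.
  by rewrite PoszM subzn.
by rewrite ffact_small // mul0r.
Qed.

Lemma ff_neg (m : int) (t : nat) : ff m t = (-1) ^+ t * ff (t%:Z - 1 - m) t.
Proof.
elim: t m => [|t IH] m; first by rewrite !ff0 expr0 mul1r.
rewrite ffS IH ffSl exprS.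
have -> : (t.+1%:Z - 1 - m - 1) = t%:Z - 1 - m by rewrite -addn1 PoszD; ring.
rewrite -addn1 PoszD; ring.
Qed.

Lemma ff_binz (m : int) (t : nat) : ff m t = binz m t%:Z * (t`!)%:Z.
Proof.
have [x Hx] : exists x, ff m t = x * (t`!)%:Z.
  case: (lerP 0 m) => hm.
    exists ('C(`|m|%N, t))%:Z.
    have eN : (`|m|%N)%:Z = m by rewrite gez0_abs.
    by rewrite -{1}eN ff_nat -bin_ffact PoszM.
  exists ((-1) ^+ t * ('C(absz (t%:Z - 1 - m)%R, t))%:Z).
  have eN : (absz (t%:Z - 1 - m)%R)%:Z = t%:Z - 1 - m by rewrite gez0_abs //; lia.
  by rewrite ff_neg -{1}eN ff_nat -bin_ffact PoszM mulrA.
rewrite /binz ltNge /=. rewrite -/(ff m t) Hx mulzK //.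

by rewrite eqz_nat -lt0n fact_gt0.
Qed.

Lemma binz_neg (m t : int) : t < 0 -> binz m t = 0.
Proof. by rewrite /binz => ->. Qed.

Lemma binz0 (m : int) : binz m 0 = 1.
Proof.
have := ff_binz m 0; rewrite ff0 fact0 mulr1 => <- //.
Qed.

Lemma binz_nat (M t : nat) : binz M%:Z t%:Z = ('C(M, t))%:Z.
Proof.
apply: (@mulIf _ (t`!)%:Z); first by rewrite eqz_nat -lt0n fact_gt0.
by rewrite -ff_binz ff_nat -bin_ffact PoszM.
Qed.

Lemma binzS (m : int) (t : nat) :
  binz m t.+1%:Z = binz (m - 1) t.+1%:Z + binz (m - 1) t%:Z.
Proof.
apply: (@mulIf _ (t.+1`!)%:Z); first by rewrite eqz_nat -lt0n fact_gt0.
rewrite mulrDl -!ff_binz factS PoszM mulrCA -ff_binz.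
rewrite ffSl ffS.
rewrite -addn1 PoszD; ring.
Qed.

Lemma binzP (m t : int) : binz m t = binz (m - 1) t + binz (m - 1) (t - 1).
Proof.
case: (ltrP t 0) => ht.
  by rewrite !binz_neg ?addr0 //; lia.
case: t ht => // t _.
case: t => [|t].
  by rewrite !binz0 (@binz_neg _ (0 - 1)) ?addr0.
rewrite binzS; congr (_ + _); congr binz.
rewrite -addn1 PoszD; ring.
Qed.

Lemma binz_small (M : nat) (t : int) : M%:Z < t -> binz M%:Z t = 0.
Proof.
case: t => // t h.
rewrite binz_nat bin_small //; lia.
Qed.

Lemma binz_natlt (l j : nat) : (l < j)%N -> binz l%:Z j%:Z = 0.
Proof. by move=> h; rewrite binz_small //; lia. Qed.

Definition tau (n J : nat) (B q l : int) : int :=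
  \sum_(0 <= j < J) binz l j%:Z * binz n%:Z (q - l + j%:Z)
                    * binz (n%:Z - q - j%:Z - 1) (B - j%:Z).

Lemma tau_Bneg n J B q l : B < 0 -> tau n J B q l = 0.
Proof.
move=> hB; rewrite /tau big1 // => j _.
by rewrite (@binz_neg _ (B - j%:Z)) ?mulr0 //; lia.
Qed.

Lemma tau_qneg n J B q (l : nat) : q < 0 -> tau n J B q l%:Z = 0.
Proof.
move=> hq; rewrite /tau big1 // => j _.
case: (leqP j l) => hj.
  by rewrite (@binz_neg _ (q - l%:Z + j%:Z)) ?mulr0 ?mul0r //; lia.
by rewrite binz_natlt // !mul0r.
Qed.

Lemma tau_l0 n J B q : (0 < J)%N ->
  tau n J B q 0 = binz n%:Z q * binz (n%:Z - q - 1) B.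
Proof.
case: J => // J _.
rewrite /tau big_nat_recl // big1_seq ?addr0.
  rewrite binz0 mul1r; congr (binz _ _ * binz _ _); lia.
move=> j _ /=.
by rewrite binz_natlt // !mul0r.
Qed.

Lemma tau_sigma n J B q l : B < J%:Z ->
  tau n J B q (l + 1) + tau n J (B - 1) q (l + 1)
  = tau n J B (q - 1) l + tau n J (B - 1) q l.
Proof.
move=> hBJ.
rewrite /tau -big_split /=.
have E1 : forall j : nat, 
  binz (l + 1) j%:Z * binz n%:Z (q - (l + 1) + j%:Z) * binz (n%:Z - q - j%:Z - 1) (B - j%:Z) +
  binz (l + 1) j%:Z * binz n%:Z (q - (l + 1) + j%:Z) * binz (n%:Z - q - j%:Z - 1) (B - 1 - j%:Z)
  = binz l j%:Z * binz n%:Z (q - 1 - l + j%:Z) * binz (n%:Z - (q - 1) - j%:Z - 1) (B - j%:Z)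
  + binz l (j%:Z - 1) * binz n%:Z (q - (l + 1) + j%:Z) * binz (n%:Z - q - j%:Z) (B - j%:Z).
  move=> j.
  rewrite -mulrDr [binz (l + 1) _]binzP addrK.
  have -> : n%:Z - (q - 1) - j%:Z - 1 = n%:Z - q - j%:Z by ring.
  have -> : q - 1 - l + j%:Z = q - (l + 1) + j%:Z by ring.
  rewrite [binz (n%:Z - q - j%:Z) (B - j%:Z)]binzP.
  have -> : B - j%:Z - 1 = B - 1 - j%:Z by ring.
  ring.
rewrite (eq_bigr _ (fun j _ => E1 j)) big_split /=; congr (_ + _).
case: J hBJ => [|J] hBJ; first by rewrite !big_geq.
rewrite big_nat_recl // binz_neg ?mul0r ?add0r //.
rewrite big_nat_recr //= (@binz_neg _ (B - 1 - J%:Z)) ?mulr0 ?addr0; last by lia.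
apply: eq_bigr => j _.
have -> : (j.+1%:Z - 1) = j%:Z by lia.
have -> : q - (l + 1) + j.+1%:Z = q - l + j%:Z by lia.
have -> : n%:Z - q - j.+1%:Z = n%:Z - q - j%:Z - 1 by lia.
have -> : B - j.+1%:Z = B - 1 - j%:Z by lia.
by [].
Qed.

Lemma trin_nat (n b s : nat) : (b + s <= n)%N ->
  ('C(n, n - (b + s)) * 'C(b + s, b) = 'C(n, s) * 'C(n - s, b))%N.
Proof.
move=> h.
set r := (n - (b + s))%N.
have h1 : ('C(b + s, b) * (b`! * s`!) = (b + s)`!)%N.
  by have := @bin_fact (b + s) b (leq_addr _ _); rewrite addKn.
have h2 : ('C(n, r) * (r`! * (b + s)`!) = n`!)%N.
  by have := @bin_fact n r (leq_subr _ _); rewrite /r subKn.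
have h3 : ('C(n - s, b) * (b`! * r`!) = (n - s)`!)%N.
  have -> : r = (n - s - b)%N by rewrite /r; lia.
  by rewrite bin_fact //; lia.
have h4 : ('C(n, s) * (s`! * (n - s)`!) = n`!)%N.
  by rewrite bin_fact //; lia.
apply/eqP; rewrite -(@eqn_pmul2r (r`! * b`! * s`!)); last first.
  by rewrite !muln_gt0 !fact_gt0.
apply/eqP; transitivity (n`!).
  by rewrite -h2 -h1; ring.
by rewrite -h4 -h3; ring.
Qed.

Lemma trin (n : nat) (B s : int) : 0 <= B -> 0 <= s ->
  binz n%:Z (n%:Z - B - s) * binz (B + s) B = binz n%:Z s * binz (n%:Z - s) B.
Proof.
case: B => [b|//] _; case: s => [S|//] _.
case: (leqP S n) => hS; last first.
  rewrite (@binz_small n S) ?mul0r; last by lia.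
  by rewrite binz_neg ?mul0r //; lia.
have eS : n%:Z - S%:Z = (n - S)%N by rewrite subzn.
case: (leqP (b + S) n) => hb; last first.
  rewrite eS (@binz_small (n - S) b) ?mulr0; last by lia.
  by rewrite binz_neg ?mul0r //; lia.
have e1 : n%:Z - b%:Z - S%:Z = (n - (b + S))%N by lia.
have e2 : b%:Z + S%:Z = (b + S)%N by lia.
by rewrite e1 e2 eS !binz_nat -!PoszM trin_nat.
Qed.

Lemma multinomE (n : nat) (a c B : int) : a + c + B = n%:Z -> 0 <= B ->
  multinom n a c = binz n%:Z c * binz (n%:Z - c) B.
Proof.
move=> habc hB.
rewrite /multinom.
case: (ltrP c 0) => hc.
  by rewrite binz_neg // mul0r andbF.
case: c hc habc => [C|//] _ habc.
case: (leqP C n) => hC; last first.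
  rewrite binz_small ?mul0r; last by lia.
  by rewrite (_ : 0 <= a = false) //; lia.
case: B hB habc => [b|//] _ habc.
have eS : n%:Z - C%:Z = (n - C)%N by rewrite subzn.
case: (leqP b (n - C)) => hb; last first.
  rewrite eS (@binz_small (n - C) b) ?mulr0; last by lia.
  by rewrite (_ : 0 <= a = false) //; lia.
have ea : a = (n - C - b)%N by lia.
have eb : n%:Z - a - C%:Z = b%:Z by lia.
rewrite eb ea /= eS !binz_nat -PoszM.
congr Posz.
have h1 : ('C(n, C) * (C`! * (n - C)`!) = n`!)%N by rewrite bin_fact.
have h2 : ('C(n - C, b) * (b`! * (n - C - b)`!) = (n - C)`!)%N by rewrite bin_fact.
rewrite -h1 -h2.
rewrite (_ : ('C(n, C) * (C`! * ('C(n - C, b) * (b`! * (n - C - b)`!))))%N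
   = ('C(n, C) * 'C(n - C, b)) * ((n - C - b)`! * C`! * b`!))%N; last by ring.
by rewrite mulnK // !muln_gt0 !fact_gt0.
Qed.

Lemma psi0 n J B q : (0 < J)%N ->
  tau n J B q 0 + tau n J (B - 1) q 0 = binz n%:Z q * binz (n%:Z - q) B.
Proof.
move=> hJ; rewrite !tau_l0 // [binz (n%:Z - q) B]binzP; ring.
Qed.

Lemma refl0 n J (b : nat) : (0 < J)%N -> forall B p : int, B < b%:Z -> B < J%:Z -> 0 <= p ->
  tau n J B p (-1) = tau n J B (n%:Z - B - p - 1) 0.
Proof.
move=> hJ; elim: b => [|b IH] B p hb hBJ hp.
  by rewrite !tau_Bneg //; lia.
case: (ltrP B 0) => hB0; first by rewrite !tau_Bneg.
have s1 := @tau_sigma n J B (p + 1) (-1) hBJ.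
rewrite addNr addrK in s1.
have i1 := IH (B - 1) (p + 1) ltac:(lia) ltac:(lia) ltac:(lia).
have e1 : n%:Z - (B - 1) - (p + 1) - 1 = n%:Z - B - p - 1 by ring.
rewrite e1 in i1.
have p1 := @psi0 n J B (p + 1) hJ.
have p2 := @psi0 n J B (n%:Z - B - p - 1) hJ.
have t1 := @trin n B (p + 1) hB0 ltac:(lia).
have e2 : n%:Z - B - (p + 1) = n%:Z - B - p - 1 by ring.
have e3 : B + (p + 1) = n%:Z - (n%:Z - B - p - 1) by ring.
rewrite e2 e3 in t1.
have -> : tau n J B p (-1) = tau n J B (p + 1) 0 + tau n J (B - 1) (p + 1) 0
   - tau n J (B - 1) (p + 1) (-1) by rewrite s1 addrK.
by rewrite p1 i1 -t1 -p2 addrK.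
Qed.

Lemma refl n J (m : nat) : (0 < J)%N -> forall B p : int, B < J%:Z -> 0 <= p ->
  tau n J B p (- (m.+1)%:Z) = tau n J B (n%:Z - B - p - 1) m%:Z.
Proof.
move=> hJ; elim: m => [|m IHm] B p hBJ hp.
  exact: (@refl0 n J J hJ B p hBJ hBJ hp).
have : forall b : nat, B < b%:Z -> tau n J B p (- (m.+2)%:Z) = tau n J B (n%:Z - B - p - 1) m.+1%:Z;
  last by apply; exact: hBJ.
move=> b; elim: b B p hBJ hp => [|b IH] B p hBJ hp hb.
  by rewrite !tau_Bneg //; lia.
case: (ltrP B 0) => hB0; first by rewrite !tau_Bneg.
have s1 := @tau_sigma n J B (p + 1) (- (m.+2)%:Z) hBJ.
have e0 : - (m.+2)%:Z + 1 = - (m.+1)%:Z by lia.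
rewrite e0 addrK in s1.
have i1 := IHm B (p + 1) hBJ ltac:(lia).
have i2 := IHm (B - 1) (p + 1) ltac:(lia) ltac:(lia).
have i3 := IH (B - 1) (p + 1) ltac:(lia) ltac:(lia) ltac:(lia).
have s2 := @tau_sigma n J B (n%:Z - B - p - 1) m%:Z hBJ.
have e1 : n%:Z - (B - 1) - (p + 1) - 1 = n%:Z - B - p - 1 by ring.
have e2 : n%:Z - B - p - 1 - 1 = n%:Z - B - (p + 1) - 1 by ring.
have e3 : m%:Z + 1 = m.+1%:Z by lia.
rewrite e1 in i2 i3.
rewrite e2 e3 in s2.
have -> : tau n J B p (- (m.+2)%:Z) = tau n J B (p + 1) (- (m.+1)%:Z)
   + tau n J (B - 1) (p + 1) (- (m.+1)%:Z) - tau n J (B - 1) (p + 1) (- (m.+2)%:Z)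
   by rewrite s1 addrK.
rewrite i1 i2 i3 -s2 addrK //.
Qed.

Definition H n k J L (B C' : int) : int :=
  \sum_(0 <= l < L) tau n J B (C' - l%:Z * k%:Z) l%:Z.

Lemma Phi n k J L B C' : (0 < J)%N -> B < J%:Z -> (1 <= k)%N -> C' < L%:Z ->
  H n k J L B C' + H n k J L (B - 1) C' - H n k J L B (C' - 1 - k%:Z)
  - H n k J L (B - 1) (C' - k%:Z) = binz n%:Z C' * binz (n%:Z - C') B.
Proof.
move=> hJ hBJ hk hL.
pose psi (l : nat) := tau n J B (C' - l%:Z * k%:Z) l%:Z + tau n J (B - 1) (C' - l%:Z * k%:Z) l%:Z.
have E : H n k J L B (C' - 1 - k%:Z) + H n k J L (B - 1) (C' - k%:Z)
   = \sum_(0 <= l < L) psi l.+1.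
  rewrite /H -big_split /=; apply: eq_bigr => l _.
  rewrite /psi.
  have := @tau_sigma n J B (C' - l.+1%:Z * k%:Z) l%:Z hBJ.
  have -> : l%:Z + 1 = l.+1%:Z by lia.
  move=> ->.
  have -> : C' - l.+1%:Z * k%:Z - 1 = C' - 1 - k%:Z - l%:Z * k%:Z.
    rewrite -addn1 PoszD; ring.
  have -> : C' - l.+1%:Z * k%:Z = C' - k%:Z - l%:Z * k%:Z.
    rewrite -addn1 PoszD; ring.
  by [].
have E2 : H n k J L B C' + H n k J L (B - 1) C' = \sum_(0 <= l < L) psi l.
  by rewrite /H -big_split.
rewrite -addrA -opprD E E2.
have T := @telescope_sumr _ 0 L psi (leq0n L).
have -> : \sum_(0 <= l < L) psi l - \sum_(0 <= l < L) psi l.+1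
   = - \sum_(0 <= l < L) (psi l.+1 - psi l).
  by rewrite sumrB opprB.
rewrite T.
have -> : psi L = 0.
  rewrite /psi !tau_qneg ?addr0 //.
    have : L%:Z <= L%:Z * k%:Z by rewrite ler_peMr //; lia.
    lia.
  have : L%:Z <= L%:Z * k%:Z by rewrite ler_peMr //; lia.
  lia.
rewrite /psi sub0r opprK mul0r subr0 psi0 //.
Qed.

Lemma maxl_int (a c : int) : c <= a -> Num.max a c = a.
Proof. by move=> h; apply/max_idPl. Qed.
Lemma minr_int (a c : int) : c <= a -> Num.min a c = c.
Proof. by move=> h; apply/min_idPr. Qed.

Definition G n k J L (a c : int) : int :=
  H n k J L (n%:Z - a - c) c - H n k J L (n%:Z - a - c) (c - 1).

Lemma H_Bneg n k J L B C' : B < 0 -> H n k J L B C' = 0.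
Proof. by move=> h; rewrite /H big1 // => l _; rewrite tau_Bneg. Qed.

Lemma H_cneg n k J L B C' : C' < 0 -> H n k J L B C' = 0.
Proof.
move=> h; rewrite /H big1 // => l _; rewrite tau_qneg //.
have : 0 <= l%:Z * k%:Z by [].
lia.
Qed.

Lemma G0 n k J L a c : (c < 0 \/ n%:Z - a - c < 0) -> G n k J L a c = 0.
Proof.
case=> h; rewrite /G.
  by rewrite !H_cneg ?subr0 //; lia.
by rewrite !H_Bneg ?subr0.
Qed.

Lemma LG n k J L (a c : int) : (0 < J)%N -> (1 <= k)%N ->
  0 <= c -> 0 <= n%:Z - a - c -> n%:Z - a - c < J%:Z -> c < L%:Z ->
  G n k J L a c + G n k J L (a + 1) c - G n k J L (a + 1 + k%:Z) (c - 1 - k%:Z)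
  - G n k J L (a + 1 + k%:Z) (c - k%:Z)
  = multinom n a c - multinom n (a + 1) (c - 1).
Proof.
move=> hJ hk hc hB hBJ hL.
set B := n%:Z - a - c.
have P1 := @Phi n k J L B c hJ hBJ hk hL.
have P2 := @Phi n k J L B (c - 1) hJ hBJ hk ltac:(lia).
rewrite (@multinomE n a c B) ?(@multinomE n (a + 1) (c - 1) B) //; try (rewrite /B; ring).
rewrite -P1 -P2 /G.
have -> : n%:Z - (a + 1) - c = B - 1 by rewrite /B; ring.
have -> : n%:Z - (a + 1 + k%:Z) - (c - 1 - k%:Z) = B by rewrite /B; ring.
have -> : n%:Z - (a + 1 + k%:Z) - (c - k%:Z) = B - 1 by rewrite /B; ring.
have -> : c - 1 - k%:Z - 1 = c - 1 - 1 - k%:Z by ring.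
have -> : c - k%:Z - 1 = c - 1 - k%:Z by ring.
ring.
Qed.

Lemma Uaux_G n k J L (f : nat) (a c : int) : (n < J)%N -> (n < L)%N -> (1 <= k)%N ->
  n%:Z < Num.max a c + f%:Z ->
  Uaux n k f a c = G n k J L (Num.max a c) (Num.min a c).
Proof.
move=> hJ hL hk.
elim: f a c => [|f IH] a c.
  move=> h /=; rewrite G0 //.
  case: (ltrP (Num.min a c) 0) => hm; first by left.
  right; lia.
move=> hf /=.
case: ifP => hcond.
  rewrite G0 //.
  move: hcond => /orP [/orP [h|h] | h]; [left|left|right]; lia.
move: hcond => /negbT; rewrite !negb_or -!leNgt => /andP [/andP [ha hc] hB].
set a' := Num.max a c; set c' := Num.min a c.
have hca : c' <= a' by rewrite /a' /c'; lia.
have hs : a' + c' = a + c by rewrite /a' /c'; lia.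
have hc' : 0 <= c' by rewrite /c'; lia.
rewrite !IH; try lia.
rewrite !maxl_int ?minr_int; try lia.
rewrite -(@LG n k J L) //; try lia.
Qed.

Lemma sum_if_eq (T i0 : nat) (F : nat -> int) : (i0 < T)%N ->
  \sum_(0 <= i < T) (if i == i0 then F i else 0) = F i0.
Proof.
elim: T => [//|T IH] hi.
rewrite big_nat_recr //=.
case: (ltngtP i0 T) => h.
- by rewrite IH // addr0.
- lia.
- rewrite big1_seq ?add0r ?h // => i /andP [_].
  rewrite mem_iota add0n => hi'.
  by rewrite ifF //; apply/eqP; lia.
Qed.

Lemma sum_if_zero (T : nat) (F : nat -> int) (P : nat -> bool) :
  (forall i, (i < T)%N -> P i = false) ->
  \sum_(0 <= i < T) (if P i then F i else 0) = 0.
Proof.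
move=> h; rewrite big1_seq // => i /andP [_]; rewrite mem_iota add0n => hi.
by rewrite h //; lia.
Qed.

Lemma stepC (N : nat) (f : int -> int) (c : int) :
  (forall c, c < - N%:Z \/ N%:Z < c -> f c = 0) ->
  \sum_(0 <= i < (N + N).+1) (if i%:Z - N%:Z == c then f (i%:Z - N%:Z) else 0) = f c.
Proof.
move=> hf.
case: (boolP ((- N%:Z <= c) && (c <= N%:Z))) => hc.
  have e : forall i : nat, (i%:Z - N%:Z == c) = (i == absz (c + N%:Z)).
    move=> i; apply/eqP/eqP => h; lia.
  rewrite (eq_bigr (fun i => if i == absz (c + N%:Z) then f (i%:Z - N%:Z) else 0)); last first.
    by move=> i _; rewrite e.
  rewrite sum_if_eq; last by lia.
  congr f; lia.
rewrite sum_if_zero ?hf //.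
  move: hc; rewrite negb_and -!ltNge => /orP [h|h]; [left|right]; lia.
move=> i hi; apply/eqP => h.
move: hc; rewrite negb_and -!ltNge => /orP [h'|h']; lia.
Qed.

Lemma keyk (k : nat) (s : int) : (s * (k.+1)%:Z == 0) = (s == 0).
Proof. by rewrite mulf_eq0 orbF. Qed.

Lemma stepA (k L : nat) (x v : int) : - L%:Z < x < L%:Z ->
  (if ((k.+1)%:Z %| x)%Z then v else 0)
  = \sum_(0 <= l < L) (if x == - (l%:Z * (k.+1)%:Z) then v else 0)
  + \sum_(0 <= m < L) (if x == (m.+1)%:Z * (k.+1)%:Z then v else 0).
Proof.
move=> /andP [hx1 hx2].
case: ifP => hd; last first.
  rewrite !sum_if_zero ?addr0 // => l _; apply/negbTE/negP => /eqP e;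
    move: hd; rewrite e ?dvdz_mull ?dvdzz //.
  by rewrite -mulNr dvdz_mull ?dvdzz.
set t := (x %/ (k.+1)%:Z)%Z.
have hx : t * (k.+1)%:Z = x by rewrite /t divzK.
have E1 : forall l : nat, (x == - (l%:Z * (k.+1)%:Z)) = (t + l%:Z == 0).
  by move=> l; rewrite -hx -subr_eq0 opprK -mulrDl keyk.
have E2 : forall m : nat, (x == (m.+1)%:Z * (k.+1)%:Z) = (t - m.+1%:Z == 0).
  by move=> m; rewrite -hx -subr_eq0 -mulrBl keyk.
have ek : x = t * k%:Z + t by rewrite -hx -addn1 PoszD mulrDr mulr1.
have s1 : 0 <= t -> 0 <= t * k%:Z by move=> h; apply: mulr_ge0.
have s2 : t <= 0 -> t * k%:Z <= 0 by move=> h; apply: mulr_le0_ge0.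
move: ek s1 s2; move: (t * k%:Z) => p ek s1 s2.
case: (lerP t 0) => ht.
  rewrite (eq_bigr (fun l => if l == absz (- t) then v else 0)); last first.
    by move=> l _; rewrite E1 (_ : (t + l%:Z == 0) = (l == absz (- t))) //; apply/eqP/eqP; lia.
  rewrite sum_if_eq; last by lia.
  rewrite sum_if_zero ?addr0 // => m _.
  by rewrite E2; apply/eqP; lia.
rewrite sum_if_zero ?add0r; last by move=> l _; rewrite E1; apply/eqP; lia.
rewrite (eq_bigr (fun m => if m == (absz t).-1 then v else 0)); last first.
  by move=> m _; rewrite E2 (_ : (t - m.+1%:Z == 0) = (m == (absz t).-1)) //; apply/eqP/eqP; lia.
by rewrite sum_if_eq //; lia.
Qed.

Lemma inner_tau n k N B C' (l : int) :
  inner n k N B C' (C' - l * (k.+1)%:Z) = tau n N.+1 B (C' - l * (k.+1)%:Z + l) l.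
Proof.
rewrite /inner /tau /lcoef.
have -> : C' - (C' - l * (k.+1)%:Z) = l * (k.+1)%:Z by ring.
rewrite mulzK //.
apply: eq_bigr => j _.
congr (_ * binz _ _ * binz _ _); ring.
Qed.

Lemma inner_van n k N B C' c : (n <= N)%N -> c < - N%:Z \/ N%:Z < c ->
  inner n k N B C' c = 0.
Proof.
move=> hn hc; rewrite /inner big1_seq // => j /andP [_].
rewrite mem_iota add0n => hj.
case: hc => hc.
  by rewrite (@binz_neg n%:Z) ?mulr0 ?mul0r //; lia.
by rewrite binz_small ?mulr0 ?mul0r //; lia.
Qed.

Lemma outer_split n k N L B C' : (n <= N)%N ->
  - L%:Z + N%:Z < C' < L%:Z - N%:Z ->
  outer n k N B C' =
    \sum_(0 <= l < L) inner n k N B C' (C' - l%:Z * (k.+1)%:Z)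
  + \sum_(0 <= m < L) inner n k N B C' (C' - (- (m.+1)%:Z) * (k.+1)%:Z).
Proof.
move=> hn /andP [hC1 hC2].
rewrite /outer big_mkcond /=.
rewrite (eq_big_nat _ _ (F2 := fun i =>
   \sum_(0 <= l < L) (if i%:Z - N%:Z - C' == - (l%:Z * (k.+1)%:Z) then inner n k N B C' (i%:Z - N%:Z) else 0)
 + \sum_(0 <= m < L) (if i%:Z - N%:Z - C' == (m.+1)%:Z * (k.+1)%:Z then inner n k N B C' (i%:Z - N%:Z) else 0))); last first.
  move=> i /andP [_ hi]; apply: stepA; lia.
rewrite big_split /= !(exchange_big_nat _ 0 (N + N).+1 0 L) /=.
congr (_ + _); apply: eq_bigr => l _; rewrite -[RHS](@stepC N (inner n k N B C')); last first.
- by move=> c hc; apply: inner_van.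
- apply: eq_bigr => i _; congr (if _ then _ else _); apply/eqP/eqP; lia.
- by move=> c hc; apply: inner_van.
- apply: eq_bigr => i _; congr (if _ then _ else _); apply/eqP/eqP; lia.
Qed.

Lemma outer_H n k N B C' : (n <= N)%N -> (1 <= k)%N -> -1 <= C' <= n%:Z ->
  0 <= B <= n%:Z ->
  outer n k N B C' = H n k N.+1 (N + n).+2 B C'
                   + H n k N.+1 (N + n).+2 B (n%:Z - B - C' - k%:Z - 1).
Proof.
move=> hn hk /andP [hC1 hC2] /andP [hB1 hB2].
rewrite (@outer_split n k N (N + n).+2); [|done|lia].
have ek : (k.+1)%:Z = k%:Z + 1 by lia.
rewrite /H; congr (_ + _); apply: eq_bigr => l _.
  rewrite inner_tau; congr tau; rewrite ek; ring.
rewrite inner_tau.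
have hm : (1 <= l.+1 * k)%N by rewrite muln_gt0.
have e1 : C' - - l.+1%:Z * (k.+1)%:Z + - l.+1%:Z = C' + l.+1%:Z * k%:Z.
  rewrite ek; ring.
have hm' : 1 <= l.+1%:Z * k%:Z by rewrite -PoszM; lia.
rewrite e1 refl //; try lia.
congr tau.
rewrite -addn1 PoszD; ring.
Qed.

Theorem lemma4p21 (n k : nat) (A C : int) :
  (1 <= n)%N -> (1 <= k)%N ->
  0 <= A -> 0 <= C -> 0 <= n%:Z - A - C ->
  0 <= A - C -> A - C < k%:Z ->
  forall N : nat, (n <= N)%N ->
  U n k A C - U n k (A - k%:Z) (C + k%:Z) =
    outer n k N (n%:Z - A - C) C - outer n k N (n%:Z - A - C) (C - 1).
Proof.
move=> hn hk hA hC hB hAC1 hAC2 N hN.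
rewrite /U.
rewrite !(@Uaux_G n k N.+1 (N + n).+2); try lia.
have -> : Num.max A C = A by lia.
have -> : Num.min A C = C by lia.
have -> : Num.max (A - k%:Z) (C + k%:Z) = C + k%:Z by lia.
have -> : Num.min (A - k%:Z) (C + k%:Z) = A - k%:Z by lia.
rewrite !outer_H //; try lia.
rewrite /G.
have -> : n%:Z - (C + k%:Z) - (A - k%:Z) = n%:Z - A - C by ring.
have -> : n%:Z - (n%:Z - A - C) - C - k%:Z - 1 = A - k%:Z - 1 by ring.
have -> : n%:Z - (n%:Z - A - C) - (C - 1) - k%:Z - 1 = A - k%:Z by ring.
ring.
Qed.
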